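(* Let $\mathcal P_1,\dots,\mathcal P_n$ be nonempty sets of probability measures on $(\Omega,\mathcal F)$, $\Lambda_i\in\mathcal H_I$, and suppose $\overline{\mathbb Q}_i=\sup_{\mathbb Q\in\mathcal P_i}\mathbb Q$ (setwise supremum) are continuous capacities. Then for every $X\in\mathcal X$, $$\mathop{\square}_{i=1}^n\sup_{\mathbb Q\in\mathcal P_i}\Lambda_i\mathrm{VaR}^{\mathbb Q}(X)=\inf\{x\in\mathbb R:\{X>x\}\in\mathcal A^{\mathbf\Lambda,(\overline{\mathbb Q}_1,\dots,\overline{\mathbb Q}_n)}_x\},$$ and this functional is of the form $\Lambda\mathrm{VaR}^w$ for some $\Lambda\in\mathcal H_I^*$ and capacity $w$. If the infimum on the right is attained at $x^*$, an optimal allocation is $X_i=(X-x^* )\mathds 1_{A_i^*}+y_i^*$ with $\sum_iy_i^*=x^*$, $(A_i^* )\in\Pi_n(\Omega)$ and $\overline{\mathbb Q}_i(\{X>x^*\}\cap A_i^* )\le\Lambda_i(y_i^* )$.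
   Context: $\mathcal X$: set of real-valued random variables containing constants and closed under sums, differences and multiplication by indicators. Capacity: monotone $w:\mathcal F\to[0,1]$ with $w(\emptyset)=0$, $w(\Omega)=1$; continuous if $w(A_k)\to0$ whenever $A_k\downarrow\emptyset$. $\Lambda\mathrm{VaR}^w(X)=\inf\{x\in\mathbb R:w(X>x)\le\Lambda(x)\}$. $\mathcal H_I$: increasing functions $\mathbb R\to(0,1)$; $\mathcal H_I^*$: increasing functions $\mathbb R\to(0,1]$. $\mathcal A^{\mathbf\Lambda,\mathbf w}_x=\{\bigcup_iA_i: w_i(A_i)\le\Lambda_i(y_i)\ \forall i\text{ for some }(y_i)\text{ with }\sum_iy_i=x\}$. Inf-convolution $\mathop{\square}_i\rho_i(X)=\inf\{\sum_i\rho_i(X_i):X_i\in\mathcal X,\sum_iX_i=X\}$. $\Pi_n(\Omega)$: measurable partitions of $\Omega$ into $n$ sets. *)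

(* Defs.v *)
From HB Require Import structures.
From mathcomp Require Import all_boot all_order all_algebra.
From mathcomp Require Import all_classical all_reals all_analysis.
Set Implicit Arguments. Unset Strict Implicit. Unset Printing Implicit Defensive.
Import Order.TTheory GRing.Theory Num.Theory.
Local Open Scope classical_set_scope.
Local Open Scope ring_scope.

Section Defs.
Context {d : measure_display} {T : measurableType d} {R : realType}.

Definition admissible_space (XX : set (T -> R)) : Prop :=
  (forall X, XX X -> measurable_fun setT X) /\
  (forall c : R, XX (fun _ => c)) /\
  (forall X Y, XX X -> XX Y -> XX (fun w => X w + Y w)) /\
  (forall X Y, XX X -> XX Y -> XX (fun w => X w - Y w)) /\
  (forall X A, XX X -> measurable A -> XX (fun w => X w * \1_A w)).

Definition capacity (w : set T -> \bar R) : Prop :=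
  w set0 = 0%E /\ w setT = 1%E /\
  (forall A B, measurable A -> measurable B -> A `<=` B -> (w A <= w B)%E).

Definition continuous_capacity (w : set T -> \bar R) : Prop :=
  capacity w /\
  (forall A : nat -> set T, (forall k, measurable (A k)) ->
     (forall k, A k.+1 `<=` A k) -> \bigcap_k A k = set0 ->
     (fun k => w (A k)) @ \oo --> 0%E).

Definition H_I (L : R -> R) : Prop :=
  {homo L : x y / x <= y} /\ (forall x, 0 < L x < 1).
Definition H_I_star (L : R -> R) : Prop :=
  {homo L : x y / x <= y} /\ (forall x, 0 < L x <= 1).

Definition LVaR (L : R -> R) (w : set T -> \bar R) (X : T -> R) : \bar R :=
  ereal_inf [set x%:E | x in [set x : R | (w [set t | (x < X t)%R] <= (L x)%:E)%E]].

Definition supLVaR (L : R -> R) (P : set (probability T R)) (X : T -> R) : \bar R :=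
  ereal_sup [set LVaR L (fun A => Q A) X | Q in P].

Definition Qbar (P : set (probability T R)) (A : set T) : \bar R :=
  ereal_sup [set Q A | Q in P].

Definition infconv (n : nat) (XX : set (T -> R))
    (rho : 'I_n -> (T -> R) -> \bar R) (X : T -> R) : \bar R :=
  ereal_inf [set (\sum_(i < n) rho i (Xs i))%E | Xs in
    [set Xs : 'I_n -> T -> R | (forall i, XX (Xs i)) /\
                                (forall t, \sum_(i < n) Xs i t = X t)]].

Definition Aset (n : nat) (L : 'I_n -> R -> R) (w : 'I_n -> set T -> \bar R)
    (x : R) : set (set T) :=
  [set B | exists (A : 'I_n -> set T) (y : 'I_n -> R),
     (forall i, measurable (A i)) /\
     (forall i, (w i (A i) <= (L i (y i))%:E)%E) /\
     \sum_(i < n) y i = x /\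
     B = \bigcup_(i in [set: 'I_n]) A i].

Definition partition_n (n : nat) (A : 'I_n -> set T) : Prop :=
  (forall i, measurable (A i)) /\
  (forall i j, i != j -> A i `&` A j = set0) /\
  \bigcup_(i in [set: 'I_n]) A i = setT.

End Defs.

(* Main.v *)
Require Import Defs.
From HB Require Import structures.
From mathcomp Require Import all_boot all_order all_algebra.
From mathcomp Require Import all_classical all_reals all_analysis.
From mathcomp Require Import lra.
Import Order.TTheory GRing.Theory Num.Theory.
Local Open Scope classical_set_scope.
Local Open Scope ring_scope.
Set Implicit Arguments.

Section Helpers.
Context {d : measure_display} {T : measurableType d} {R : realType}.

Definition phi (x : R) : R := (1 + x / (1 + `|x|)) / 2.

Lemma g_lt (x y : R) : x < y -> x / (1 + `|x|) < y / (1 + `|y|).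
Proof.
move=> xy.
have hx : 0 < 1 + `|x| by rewrite ltr_wpDr.
have hy : 0 < 1 + `|y| by rewrite ltr_wpDr.
rewrite ltr_pdivrMr // mulrAC ltr_pdivlMr //.
have [x0|x0] := leP 0 x; have [y0|y0] := leP 0 y.
- rewrite (ger0_norm x0) (ger0_norm y0); nra.
- lra.
- rewrite (ltr0_norm x0) (ger0_norm y0); nra.
- rewrite (ltr0_norm x0) (ltr0_norm y0); nra.
Qed.

Lemma g_bd (x : R) : -1 < x / (1 + `|x|) < 1.
Proof.
have hx : 0 < 1 + `|x| by rewrite ltr_wpDr.
rewrite ltr_pdivrMr // ltr_pdivlMr //.
have [x0|x0] := leP 0 x; [rewrite ger0_norm // | rewrite ltr0_norm //]; apply/andP; split; lra.
Qed.

Lemma phi_lt x y : x < y -> phi x < phi y.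
Proof. move=> /g_lt h; rewrite /phi ltr_pM2r ?invr_gt0 //; lra. Qed.
Lemma phi_le x y : x <= y -> phi x <= phi y.
Proof. rewrite le_eqVlt => /predU1P [->//|/phi_lt/ltW //]. Qed.
Lemma phi_gt0 x : 0 < phi x.
Proof. have /andP[h1 h2] := g_bd x; rewrite /phi divr_gt0 //; lra. Qed.
Lemma phi_lt1 x : phi x < 1.
Proof. have /andP[h1 h2] := g_bd x; rewrite /phi ltr_pdivrMr //; lra. Qed.
Lemma phi_le_inv x y : phi x <= phi y -> x <= y.
Proof. by move=> h; rewrite leNgt; apply/negP => /phi_lt; rewrite ltNge h. Qed.

Lemma mlt (X : T -> R) (x : R) :
  measurable_fun setT X -> measurable [set t | x < X t].
Proof.
move=> mX.
have := mX measurableT `]x, +oo[%classic (measurable_itv _).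
rewrite setTI; congr measurable; apply/seteqP; split => t /=;
  by rewrite in_itv /= andbT.
Qed.

Lemma LVaR_lb (L : R -> R) (Q : probability T R) (Y : T -> R) :
  H_I L -> measurable_fun setT Y ->
  exists x0 : R, (x0%:E <= LVaR L (fun A => Q A) Y)%E.
Proof.
move=> [Lh Lb] mY.
pose F := fun k : nat => [set t | - (k%:R) < Y t].
have mF k : measurable (F k) by exact: mlt.
have UF : \bigcup_k F k = setT.
  apply/seteqP; split => // t _.
  have [k /andP[_ hk]] : exists k : nat, (0 <= `|Y t| < k%:R) by
    exists (Num.bound `|Y t|); rewrite normr_ge0 archi_boundP.
  exists k => //; rewrite /F /=.
  by rewrite ltrNl; apply: le_lt_trans hk; rewrite -normrN ler_norm.
have ndF : nondecreasing_seq F.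
  move=> m k mk; apply/subsetPset; rewrite /F => t /=; apply: le_lt_trans.
  by rewrite lerN2 ler_nat.
have mU : measurable (\bigcup_k F k) by rewrite UF.
have cv := @nondecreasing_cvg_mu _ _ R Q F mF mU ndF.
rewrite UF in cv.
have Q1 : Q setT = 1%E := probability_setT _.
have {}cv : (Q \o F) x @[x --> \oo] --> (1%E : \bar R).
  by move: cv; rewrite [X in _ --> X](_ : _ = 1%E) //.
have [k hk] : exists k, ((L 0)%:E < Q (F k))%E.
  apply: contrapT => hn.
  have : (1 <= (L 0)%:E)%E.
    apply: (cvge_to_le cv); apply: filterE => k /=.
    by rewrite leNgt; apply/negP => h; apply: hn; exists k.
  by rewrite lee_fin leNgt; have /andP[_ ->] := Lb 0.
exists (- k%:R); apply: le_ereal_inf_tmp => _ [x Sx <-]; rewrite lee_fin.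
rewrite leNgt; apply/negP => xk.
have : (Q (F k) <= (L 0)%:E)%E.
  apply: (le_trans (le_measure _ _ _ _)); last first.
    apply: (le_trans Sx); rewrite lee_fin; apply: Lh.
    by apply: (le_trans (ltW xk)); rewrite oppr_le0.
  all: try (by rewrite inE; exact: mlt).
  by move=> t /=; apply: lt_trans.
by apply/negP; rewrite -ltNge.
Qed.


Lemma supLVaR_lt (L : R -> R) (P : set (probability T R)) (Y : T -> R) (z : R) :
  H_I L -> measurable_fun setT Y -> (supLVaR L P Y < z%:E)%E ->
  (Qbar P [set t | (z < Y t)%R] <= (L z)%:E)%E.
Proof.
move=> [Lh Lb] mY hz; apply: ge_ereal_sup => _ [Q PQ <-].
have : (LVaR L (fun A => Q A) Y < z%:E)%E.
  apply: le_lt_trans hz; apply: ereal_sup_ubound; by exists Q.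
move=> /ereal_inf_lt [_ [x Sx <-]]; rewrite lte_fin => xz.
apply: (le_trans _ (le_trans Sx _)); last by rewrite lee_fin; apply: Lh; exact: ltW.
apply: le_measure; rewrite ?inE; try exact: mlt.
by move=> t /=; apply: lt_trans.
Qed.

Lemma LVaR_le (L : R -> R) (w : set T -> \bar R) (Y : T -> R) (y : R) :
  (w [set t | (y < Y t)%R] <= (L y)%:E)%E -> (LVaR L w Y <= y%:E)%E.
Proof. by move=> h; apply: ereal_inf_lbound; exists y. Qed.

Lemma Aset_mono_x (n : nat) (L : 'I_n -> R -> R) (w : 'I_n -> set T -> \bar R)
  (x x' : R) (B : set T) :
  (0 < n)%N -> (forall i, H_I (L i)) -> x <= x' -> Aset L w x B -> Aset L w x' B.
Proof.
move=> n0 HL xx [A [y [mA [wA [sy ->]]]]].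
pose c := (x' - x) / n%:R.
have c0 : 0 <= c by rewrite divr_ge0 // subr_ge0.
exists A, (fun i => y i + c); split => //; split.
  move=> i; apply: (le_trans (wA i)); rewrite lee_fin.
  by case: (HL i) => Lh _; apply: Lh; rewrite lerDl.
split => //.
rewrite big_split /= sy sumr_const card_ord /c -[_ *+ n]mulr_natr divfK.
  by rewrite addrC subrK.
by rewrite pnatr_eq0 -lt0n.
Qed.

Lemma Aset_sub (n : nat) (L : 'I_n -> R -> R) (w : 'I_n -> set T -> \bar R)
  (x : R) (B B' : set T) :
  (forall i, capacity (w i)) -> measurable B' -> B' `<=` B ->
  Aset L w x B -> Aset L w x B'.
Proof.
move=> cw mB' sB [A [y [mA [wA [sy eB]]]]].
exists (fun i => A i `&` B'), y; split.
  by move=> i; apply: measurableI.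
split.
  move=> i; apply: le_trans (wA i); case: (cw i) => _ [_ mono].
  by apply: mono => //; exact: measurableI.
split => //.
rewrite -setI_bigcupl -eB; apply/seteqP; split => t //=.
- by move=> h; split => //; exact: sB.
- by case.
Qed.


Lemma first_index (n : nat) (A : 'I_n -> set T) (t : T) (j : 'I_n) :
  A j t -> exists i : 'I_n, A i t /\ forall j' : 'I_n, (j' < i)%N -> ~ A j' t.
Proof.
move: {2}(val j) (erefl (val j)) => k; elim/ltn_ind: k j => k IH j jk Ajt.
have [[j' [lt Aj']]|nex] := pselect (exists j' : 'I_n, (j' < j)%N /\ A j' t).
  by apply: (IH (val j') _ j') => //; rewrite -jk.
exists j; split => // j' lt Aj'; apply: nex; by exists j'.
Qed.

Lemma Aset_partition (n : nat) (L : 'I_n -> R -> R) (w : 'I_n -> set T -> \bar R)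
  (x : R) (B : set T) :
  (forall i, capacity (w i)) -> (0 < n)%N -> Aset L w x B ->
  exists (ys : 'I_n -> R) (As : 'I_n -> set T),
    \sum_(i < n) ys i = x /\ partition_n As /\
    forall i, (w i (B `&` As i) <= (L i (ys i))%:E)%E.
Proof.
move=> cw n0 [A [y [mA [wA [sy eB]]]]].
have mB : measurable B.
  by rewrite eB; apply: fin_bigcup_measurable => //; exact: finite_finset.
pose As := fun i : 'I_n => (A i `|` (if val i == 0%N then ~` B else set0))
   `\` \bigcup_(j in [set j : 'I_n | (j < i)%N]) A j.
have mAs i : measurable (As i).
  apply: measurableD; last first.
    by apply: fin_bigcup_measurable => //; exact: finite_finset.
  apply: measurableU => //; case: ifP => _ //; exact: measurableC.
have AB j : A j `<=` B by rewrite eB => t Ajt; exists j.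
have disj (i j : 'I_n) : (i < j)%N -> As i `&` As j = set0.
  move=> ij; apply/seteqP; split => // t [[Hi _] [Hj nj]].
  case: Hi => [Ait|].
    by apply: nj; exists i.
  case: ifP => // i0 nB.
  case: Hj => [Ajt|]; first by apply: nB; exact: (AB j).
  case: ifP => // /eqP j0.
  by move: ij; rewrite j0.
exists y, As; split => //; split.
  split => //; split.
    move=> i j /negPf ij.
    have [h1|h2|h3] := ltngtP i j; first exact: disj.
      by rewrite setIC; exact: disj.
    by move: ij; rewrite (val_inj h3) eqxx.
  apply/seteqP; split => // t _.
  have i0 : 'I_n := Ordinal n0.
  have [Bt|nBt] := pselect (B t).
    move: (Bt); rewrite {1}eB => -[j1 _ Ajt].
    have [i [Ait mi]] := @first_index n A t j1 Ajt.
    exists i => //; split; first by left.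
    by move=> [j' /= lt Aj']; exact: (mi j' lt Aj').
  exists (Ordinal n0) => //; split.
    by right => /=.
  by move=> [j' /= lt _]; rewrite ltn0 in lt.
move=> i; apply: le_trans (wA i); case: (cw i) => _ [_ mono].
apply: mono => //; first exact: measurableI.
move=> t [Bt [HU _]]; case: HU => // h; move: h; case: ifP => // _ h; by case: (h Bt).
Qed.


Lemma sum_indic_partition (n : nat) (As : 'I_n -> set T) (t : T) :
  partition_n As -> \sum_(i < n) \1_(As i) t = 1 :> R.
Proof.
move=> [mAs [dis cov]].
have : [set: T] t by [].
rewrite -cov => -[j _ Ajt].
rewrite (bigD1 j) //= big1 ?addr0.
  by rewrite indicE mem_set.
move=> i ij; rewrite indicE memNset //= => Ait.
have : (As i `&` As j) t by [].
by rewrite dis.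
Qed.


Lemma alloc (XX : set (T -> R)) (n : nat) (P : 'I_n -> set (probability T R))
  (L : 'I_n -> R -> R) (X : T -> R) (xs : R) (ys : 'I_n -> R) (As : 'I_n -> set T) :
  admissible_space XX -> XX X ->
  \sum_(i < n) ys i = xs -> partition_n As ->
  (forall i, (Qbar (P i) ([set t | (xs < X t)%R] `&` As i) <= (L i (ys i))%:E)%E) ->
  let Xs := fun i t => (X t - xs) * \1_(As i) t + ys i in
  (forall i, XX (Xs i)) /\ (forall t, \sum_(i < n) Xs i t = X t) /\
  (\sum_(i < n) supLVaR (L i) (P i) (Xs i) <= xs%:E)%E.
Proof.
move=> [hm [hc [hadd [hsub hmul]]]] hX sy part hQ Xs.
have [mAs _] := part.
split.
  move=> i; exact: (hadd _ _ (hmul _ _ (hsub _ _ hX (hc xs)) (mAs i)) (hc (ys i))).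
split.
  move=> t; rewrite /Xs big_split /= sy -mulr_sumr sum_indic_partition //.
  by rewrite mulr1 subrK.
rewrite -sy -sumEFin; apply: lee_sum => i _.
apply: ge_ereal_sup => _ [Q PQ <-]; apply: LVaR_le.
have -> : [set t | ys i < Xs i t] = [set t | (xs < X t)%R] `&` As i.
  apply/seteqP; split => t /=; rewrite /Xs indicE.
    case: (boolP (t \in As i)) => [/set_mem ti|ti]; rewrite ?mulr1 ?mulr0 ?add0r.
      by rewrite ltrDr subr_gt0.
    by rewrite ltxx.
  by move=> [xt ti]; rewrite mem_set // mulr1 ltrDr subr_gt0.
apply: le_trans (hQ i); apply: ereal_sup_ubound; by exists Q.
Qed.



Lemma part1 (XX : set (T -> R)) (n : nat) (P : 'I_n -> set (probability T R))
  (L : 'I_n -> R -> R) (X : T -> R) :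
  admissible_space XX -> (0 < n)%N -> (forall i, P i !=set0) ->
  (forall i, H_I (L i)) -> (forall i, capacity (Qbar (P i))) -> XX X ->
  infconv XX (fun i => supLVaR (L i) (P i)) X =
  ereal_inf [set x%:E | x in [set x : R |
      Aset L (fun i => Qbar (P i)) x [set t | (x < X t)%R]]].
Proof.
move=> adm n0 Pne HL cw hX.
have [hm _] := adm.
apply/eqP; rewrite eq_le; apply/andP; split.
  apply: le_ereal_inf_tmp => _ [x Sx <-].
  have [ys [As [sy [part hQ]]]] := Aset_partition cw n0 Sx.
  have [hXs [hsum hle]] := alloc P L X ys adm hX sy part hQ.
  apply: le_trans hle; apply: ereal_inf_lbound.
  by exists (fun i t => (X t - x) * \1_(As i) t + ys i).
apply: le_ereal_inf_tmp => _ [Xs [hXs hsum] <-].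
pose r := fun i => supLVaR (L i) (P i) (Xs i).
have rNy i : r i != -oo%E.
  have [Q PQ] := Pne i.
  have [x0 hx0] := LVaR_lb Q (HL i) (hm _ (hXs i)).
  rewrite -ltNye; apply: (@lt_le_trans _ _ x0%:E); first exact: ltNyr.
  apply: (le_trans hx0); apply: ereal_sup_ubound; by exists Q.
case: (boolP [exists i, r i == +oo%E]) => hy.
  have /eqP -> : (\sum_(i < n) r i == +oo)%E.
    by rewrite esum_eqy //; apply/existsP; case/existsP: hy => i hi; exists i.
  exact: leey.
have rfin i : r i \is a fin_num.
  rewrite fin_numE rNy /=; apply/negP => h; move/negP: hy; apply.
  by apply/existsP; exists i.
apply/lee_addgt0Pr => e e0.
pose z := fun i => fine (r i) + e / n%:R.
have en0 : 0 < e / n%:R by rewrite divr_gt0 // ltr0n.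
have -> : (\sum_(i < n) r i + e%:E = (\sum_(i < n) z i)%:E)%E.
  rewrite /z big_split /= sumr_const card_ord -[_ *+ n]mulr_natr divfK; last first.
    by rewrite pnatr_eq0 -lt0n.
  rewrite EFinD -sumEFin; congr (_ + _)%E; apply: eq_bigr => i _.
  by rewrite fineK.
apply: ereal_inf_lbound; exists (\sum_(i < n) z i) => //.
exists (fun i => [set t | z i < Xs i t] `&` [set t | \sum_(j < n) z j < X t]), z.
split.
  by move=> i; apply: measurableI; apply: mlt => //; apply: hm.
split.
  move=> i; apply: (@le_trans _ _ (Qbar (P i) [set t | (z i < Xs i t)%R])).
    case: (cw i) => _ [_ mono]; apply: mono; last exact: subIsetl.
      by apply: measurableI; apply: mlt => //; apply: hm.
    by apply: mlt; apply: hm.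
  apply: supLVaR_lt => //; first exact: hm.
  rewrite -/(r i) -(fineK (rfin i)) lte_fin /z ltrDl //.
split => //.
apply/seteqP; split => t /=; last by case=> i _ [].
move=> hs.
have [i hi] : exists i, z i < Xs i t.
  apply: contrapT => hn.
  move: hs; rewrite -hsum; apply/negP; rewrite -leNgt.
  apply: ler_sum => i _; rewrite leNgt; apply/negP => h; apply: hn; by exists i.
by exists i.
Qed.


Lemma up_inf (S1 S2 : set R) :
  (forall x x', S1 x -> x < x' -> S2 x') ->
  (ereal_inf [set x%:E | x in S2] <= ereal_inf [set x%:E | x in S1])%E.
Proof.
move=> h; apply: le_ereal_inf_tmp => _ [x Sx <-].
apply/lee_addgt0Pr => e e0; apply: ereal_inf_lbound.
by exists (x + e); [apply: (h x) => //; rewrite ltrDl | rewrite EFinD].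
Qed.

Lemma part2 (G : R -> set T -> Prop) :
  setT != set0 :> set T ->
  (forall z x B, z <= x -> G z B -> G x B) ->
  (forall x B B', measurable B' -> B' `<=` B -> G x B -> G x B') ->
  (forall x, G x set0) ->
  exists (L0 : R -> R) (w : set T -> \bar R), H_I_star L0 /\ capacity w /\
    forall X, measurable_fun setT X ->
      ereal_inf [set x%:E | x in [set x | G x [set t | (x < X t)%R]]] = LVaR L0 w X.
Proof.
move=> Tne Gx GB G0.
pose f := fun B => ereal_inf [set x%:E | x in [set x | G x B]].
pose c := f setT.
pose psi := fun v : \bar R => match v with EFin r => phi r | +oo%E => 1 | -oo%E => 0 end.
pose L0 := fun x => if (c < x%:E)%E then 1 else phi x.
pose w := fun B => if `[< B = setT >] then 1%E else (psi (f B))%:E.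
have psi_le1 v : psi v <= 1 by case: v => [r| |] //=; exact/ltW/phi_lt1.
have psi_ge0 v : 0 <= psi v by case: v => [r| |] //=; exact/ltW/phi_gt0.
have psi_mono v1 v2 : (v1 <= v2)%E -> psi v1 <= psi v2.
  case: v1 => [r1| |]; case: v2 => [r2| |] //=.
  - by rewrite lee_fin; exact: phi_le.
  - by move=> _; exact/ltW/phi_lt1.
  - by move=> _; exact/ltW/phi_gt0.
have psi_inv v x : psi v <= phi x -> (v <= x%:E)%E.
  case: v => [r| |] //=.
  - by rewrite lee_fin; exact: phi_le_inv.
  - by move=> h; have := phi_lt1 x; rewrite ltNge h.
  - by rewrite leNye.
have f_mono A B : measurable A -> A `<=` B -> (f A <= f B)%E.
  move=> mA AB; apply: ereal_inf_le_tmp => _ [x Gxb <-]; exists x => //.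
  exact: GB Gxb.
have f0 : f set0 = -oo%E.
  rewrite /f -[RHS](@ereal_inf_real R); congr ereal_inf.
  by apply/seteqP; split => _ [x _ <-]; exists x => //; exact: G0.
exists L0, w; split.
  split.
    move=> x y xy; rewrite /L0; case: ifP => cx.
      by rewrite (lt_le_trans cx) // lee_fin.
    by case: ifP => _; [exact/ltW/phi_lt1 | exact: phi_le].
  move=> x; rewrite /L0; case: ifP => _; first by rewrite ltr01 lexx.
  by rewrite phi_gt0 ltW // phi_lt1.
split.
  split.
    rewrite /w; case: asboolP => [h|_]; first by move: Tne; rewrite -h eqxx.
    by rewrite f0.
  split; first by rewrite /w; case: asboolP.
  move=> A B mA mB AB; rewrite /w.
  case: asboolP => [hA|nA]; case: asboolP => [hB|nB] //.
  - by exfalso; apply: nB; apply/seteqP; split => // t _; apply: AB; rewrite hA.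
  - by rewrite lee_fin.
  - by rewrite lee_fin; apply: psi_mono; exact: f_mono.
move=> X mX.
have mB x : measurable [set t | (x < X t)%R] by exact: mlt.
apply/eqP; rewrite eq_le; apply/andP; split; apply: up_inf => x x' Sx xx' /=.
-
  case: (boolP (c < x%:E)%E) => cx;
    [rewrite /= /L0 cx /w in Sx | rewrite /= /L0 (negbTE cx) /w in Sx].
    have [_ [z Gz <-] zx] := ereal_inf_lt cx.
    apply: (GB x' setT) => //; apply: (Gx z) => //.
    by apply: ltW; apply: lt_trans xx'; rewrite -lte_fin.
  move: Sx; case: asboolP => hB Sx.
    by have := phi_lt1 x; rewrite ltNge -lee_fin Sx.
  rewrite lee_fin in Sx.
  have : (f [set t | (x < X t)%R] < x'%:E)%E.
    by apply: le_lt_trans (psi_inv _ _ Sx) _; rewrite lte_fin.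
  move=> /ereal_inf_lt [_ [z Gz <-]]; rewrite lte_fin => zx.
  apply: (GB x' [set t | (x < X t)%R]) => //.
    by move=> t /=; apply: lt_trans.
  by apply: (Gx z) => //; exact: ltW.
-
  rewrite /L0 /w.
  case: asboolP => hB.
    have hBx : [set t | (x < X t)%R] = setT.
      apply/seteqP; split => // t _.
      have : [set t | (x' < X t)%R] t by rewrite hB.
      by move=> /= h; apply: lt_trans h.
    have cx : (c < x'%:E)%E.
      apply: le_lt_trans (_ : x%:E < x'%:E)%E; last by rewrite lte_fin.
      by apply: ereal_inf_lbound; exists x => //; rewrite -hBx.
    by rewrite cx.
  case: ifP => _; first by rewrite lee_fin.
  rewrite lee_fin; apply: le_trans (psi_mono _ (x'%:E) _) _ => //.
  apply: le_trans (f_mono _ [set t | (x < X t)%R] _ _) _ => //.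
    by move=> t /=; apply: lt_trans.
  apply: le_trans (_ : x%:E <= _)%E; last by rewrite lee_fin ltW.
  by apply: ereal_inf_lbound; exists x.
Qed.

End Helpers.

Unset Implicit Arguments.

Theorem mainTheorem12 (d : measure_display) (T : measurableType d) (R : realType)
  (XX : set (T -> R)) (n : nat) (P : 'I_n -> set (probability T R))
  (L : 'I_n -> R -> R) :
  admissible_space XX ->
  (0 < n)%N ->
  (forall i, P i !=set0) ->
  (forall i, H_I (L i)) ->
  (forall i, continuous_capacity (Qbar (P i))) ->
  let rho := fun i => supLVaR (L i) (P i) in
  let RHS := fun X : T -> R =>
    ereal_inf [set x%:E | x in [set x : R |
      Aset L (fun i => Qbar (P i)) x [set t | (x < X t)%R]]] in
  (forall X, XX X -> infconv XX rho X = RHS X) /\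
  (exists (L0 : R -> R) (w : set T -> \bar R),
     H_I_star L0 /\ capacity w /\
     forall X, XX X -> infconv XX rho X = LVaR L0 w X) /\
  (forall X (xs : R), XX X ->
     Aset L (fun i => Qbar (P i)) xs [set t | (xs < X t)%R] ->
     RHS X = xs%:E ->
     (exists (ys : 'I_n -> R) (As : 'I_n -> set T),
        \sum_(i < n) ys i = xs /\ partition_n As /\
        forall i, (Qbar (P i) ([set t | (xs < X t)%R] `&` As i)
                    <= (L i (ys i))%:E)%E) /\
     (forall (ys : 'I_n -> R) (As : 'I_n -> set T),
        \sum_(i < n) ys i = xs -> partition_n As ->
        (forall i, (Qbar (P i) ([set t | (xs < X t)%R] `&` As i)
                     <= (L i (ys i))%:E)%E) ->
        let Xs := fun i t => (X t - xs) * \1_(As i) t + ys i in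
        (forall i, XX (Xs i)) /\
        (forall t, \sum_(i < n) Xs i t = X t) /\
        (\sum_(i < n) rho i (Xs i))%E = infconv XX rho X)).
Proof.
move=> adm n0 Pne HL cc rho RHS.
have cw i : capacity (Qbar (P i)) by case: (cc i).
have [hm _] := adm.
have P1 X : XX X -> infconv XX rho X = RHS X.
  by move=> hX; apply: part1.
split; first exact: P1.
split.
  have Tne : setT != set0 :> set T.
    apply/eqP => h; have [Q _] := Pne (Ordinal n0).
    have := @probability_setT _ _ _ Q; rewrite h measure0 => /eqP.
    by rewrite eq_sym eqe oner_eq0.
  have G1 : forall z x B, z <= x -> Aset L (fun i => Qbar (P i)) z B ->
      Aset L (fun i => Qbar (P i)) x B.
    by move=> z x B zx hz; apply: Aset_mono_x; [exact: n0 | exact: HL | exact: zx | exact: hz].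
  have G2 : forall x B B', measurable B' -> B' `<=` B ->
      Aset L (fun i => Qbar (P i)) x B -> Aset L (fun i => Qbar (P i)) x B'.
    by move=> x B B' mB' sB hB; apply: Aset_sub; [exact: cw | exact: mB' | exact: sB | exact: hB].
  have G0 : forall x, Aset L (fun i => Qbar (P i)) x set0.
    move=> x.
    exists (fun _ => set0), (fun _ => x / n%:R); split => //; split.
    move=> i; case: (cw i) => -> _; rewrite lee_fin; case: (HL i) => _ h.
    by have /andP[/ltW] := h (x / n%:R).
  split.
    rewrite sumr_const card_ord -[_ *+ n]mulr_natr divfK //.
    by rewrite pnatr_eq0 -lt0n.
    by apply/seteqP; split => // t [].
  have [L0 [w [hL0 [cap hw]]]] := part2 (fun x B => Aset L (fun i => Qbar (P i)) x B) Tne G1 G2 G0.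
  exists L0, w; split => //; split => // X hX.
  by rewrite P1 // /RHS hw //; exact: hm.
move=> X xs hX hA hR; split.
  exact: (Aset_partition cw n0 hA).
move=> ys As sy part hQ Xs.
have [a [b c]] := alloc P L X ys adm hX sy part hQ.
split => //; split => //.
apply/eqP; rewrite eq_le; apply/andP; split.
  by rewrite P1 // hR; exact: c.
by apply: ereal_inf_lbound; exists Xs.
Qed.
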